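(* Let $s$ be a bounded continuous proper scoring rule with convex exposure on an $n$-outcome forecast domain $\mathcal{D}$, with exposure function $\mathbf{g}$, and let $M$ be an upper bound on $\|\mathbf{g}\|_2$ over $\mathcal{D}$. For time steps $t=1,\dots,T$, an agent chooses a weight vector $\mathbf{w}^t\in\Delta^m$, after which forecasts $\mathbf{p}_1^t,\dots,\mathbf{p}_m^t\in\mathcal{D}$ and an outcome $j^t\in[n]$ are chosen adversarially and the agent receives score $s(\mathbf{p}^*_t(\mathbf{w}^t);j^t)$, where $\mathbf{p}^*_t(\mathbf{w})$ denotes the QA pool of $(\mathbf{p}_i^t,w_i)_{i=1}^m$ with respect to $\mathbf{g}$. Let $L^t(\mathbf{w}):=-s(\mathbf{p}^*_t(\mathbf{w});j^t)$. Suppose the agent plays as follows: $\mathbf{w}^1\in\Delta^m$ is arbitrary, and for each $t$, with $\eta_t:=\frac{1}{M\sqrt{mt}}$, it sets $\tilde{\mathbf{w}}^{t+1}=\mathbf{w}^t-\eta_t\nabla L^t(\mathbf{w}^t)$ and lets $\mathbf{w}^{t+1}$ be $\tilde{\mathbf{w}}^{t+1}$ if it lies in $\Delta^m$ and otherwise the orthogonal (Euclidean) projection of $\tilde{\mathbf{w}}^{t+1}$ onto $\Delta^m$. Then for every $\mathbf{w}^*\in\Delta^m$, \[\sum_{t=1}^T\Big(s(\mathbf{p}^*_t(\mathbf{w}^* );j^t)-s(\mathbf{p}^*_t(\mathbf{w}^t);j^t)\Big)\le 3\sqrt{m}\,M\sqrt{T}.\]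
   Context: $\Delta^k$ is the standard simplex in $\mathbb{R}^k$. An $n$-outcome forecast domain is a convex $(n-1)$-dimensional subset of $\Delta^n$. A proper scoring rule on $\mathcal{D}$ is $s:\mathcal{D}\times[n]\to\mathbb{R}$ with $\sum_j p(j)s(\mathbf{p};j)\ge\sum_j p(j)s(\mathbf{x};j)$ for all $\mathbf{p},\mathbf{x}\in\mathcal{D}$, equality only if $\mathbf{x}=\mathbf{p}$. $G(\mathbf{p}):=\sum_j p(j)s(\mathbf{p};j)$ is differentiable and strictly convex; the exposure function is $\mathbf{g}=\nabla G$, with values understood modulo translation by the all-ones vector (equivalently projected onto $\{\mathbf{x}:\sum_i x_i=0\}$). Convex exposure: range of $\mathbf{g}$ is convex. The QA pool of $(\mathbf{p}_i,w_i)$ is the unique $\mathbf{p}^*\in\mathcal{D}$ with $\mathbf{g}(\mathbf{p}^* )=\sum_i w_i\mathbf{g}(\mathbf{p}_i)$ (modulo the all-ones vector). The gradient $\nabla L^t$ is taken with respect to $\mathbf{w}$ and is likewise interpreted modulo translation by the all-ones vector in $\mathbb{R}^m$. *)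

(* Defs.v *)
From HB Require Import structures.
From mathcomp Require Import all_boot all_order all_algebra.
From mathcomp Require Import boolp classical_sets reals.
Set Implicit Arguments. Unset Strict Implicit. Unset Printing Implicit Defensive.
Import Order.TTheory GRing.Theory Num.Theory.
Local Open Scope ring_scope.
Local Open Scope classical_set_scope.

Section Defs.
Variable R : realType.

Definition dot k (x y : 'rV[R]_k) : R := \sum_(i < k) x ord0 i * y ord0 i.
Definition norm2 k (x : 'rV[R]_k) : R := Num.sqrt (dot x x).

Definition simplex k : set 'rV[R]_k :=
  [set x | (forall i, 0 <= x ord0 i) /\ \sum_(i < k) x ord0 i = 1].
Arguments simplex k : clear implicits.

Definition convex_set k (A : set 'rV[R]_k) : Prop :=
  forall x y, A x -> A y -> forall l : R, 0 <= l <= 1 ->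
    A (l *: x + (1 - l) *: y).

(* n-outcome forecast domain: a convex (n-1)-dimensional subset of Delta^n.
   (n-1)-dimensional: its affine hull has dimension n-1, i.e. there are a
   point p of D and n-1 points x_i of D with x_i - p linearly independent. *)
Definition forecast_domain n (D : set 'rV[R]_n) : Prop :=
  convex_set D /\ D `<=` simplex n /\
  exists (p : 'rV[R]_n) (x : 'I_n.-1 -> 'rV[R]_n),
    D p /\ (forall i, D (x i)) /\
    row_free (\matrix_(i < n.-1) (x i - p)).

Definition expected_score n (s : 'rV[R]_n -> 'I_n -> R) (p : 'rV[R]_n) : R :=
  \sum_(j < n) p ord0 j * s p j.

Definition proper_scoring_rule n (D : set 'rV[R]_n) (s : 'rV[R]_n -> 'I_n -> R)
  : Prop :=
  forall p x, D p -> D x ->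
    \sum_(j < n) p ord0 j * s x j <= \sum_(j < n) p ord0 j * s p j /\
    (\sum_(j < n) p ord0 j * s x j = \sum_(j < n) p ord0 j * s p j -> x = p).

Definition bounded_scoring_rule n (D : set 'rV[R]_n) (s : 'rV[R]_n -> 'I_n -> R)
  : Prop :=
  exists B : R, forall p j, D p -> `|s p j| <= B.

Definition continuous_scoring_rule n (D : set 'rV[R]_n)
  (s : 'rV[R]_n -> 'I_n -> R) : Prop :=
  forall j p, D p -> forall eps : R, 0 < eps -> exists2 delta : R, 0 < delta &
    forall q, D q -> norm2 (q - p) < delta -> `|s q j - s p j| < eps.

Definition strictly_convex_on k (A : set 'rV[R]_k) (f : 'rV[R]_k -> R) : Prop :=
  forall x y, A x -> A y -> x <> y -> forall l : R, 0 < l < 1 ->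
    f (l *: x + (1 - l) *: y) < l * f x + (1 - l) * f y.

(* When A is convex and full-dimensional
   in the hyperplane {sum = 1}, d is determined exactly modulo the all-ones
   vector. *)
Definition rel_gradient k (A : set 'rV[R]_k) (f : 'rV[R]_k -> R)
  (x d : 'rV[R]_k) : Prop :=
  forall eps : R, 0 < eps -> exists2 delta : R, 0 < delta &
    forall y, A y -> norm2 (y - x) < delta ->
      `|f y - f x - dot d (y - x)| <= eps * norm2 (y - x).

(* g is the exposure function of s on D: g = grad G, taken with the
   representative projected onto {x : sum_i x_i = 0}. *)
Definition exposure_function n (D : set 'rV[R]_n) (s : 'rV[R]_n -> 'I_n -> R)
  (g : 'rV[R]_n -> 'rV[R]_n) : Prop :=
  forall p, D p ->
    \sum_(i < n) g p ord0 i = 0 /\ rel_gradient D (expected_score s) p (g p).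

Definition convex_exposure n (D : set 'rV[R]_n) (g : 'rV[R]_n -> 'rV[R]_n)
  : Prop := convex_set (g @` D).

Definition QA_pool n m (D : set 'rV[R]_n) (g : 'rV[R]_n -> 'rV[R]_n)
  (ps : 'I_m -> 'rV[R]_n) (w : 'rV[R]_m) : 'rV[R]_n :=
  xget 0 [set p | D p /\ g p = \sum_(i < m) w ord0 i *: g (ps i)].

Definition QA_loss n m (D : set 'rV[R]_n) (s : 'rV[R]_n -> 'I_n -> R)
  (g : 'rV[R]_n -> 'rV[R]_n) (ps : 'I_m -> 'rV[R]_n) (j : 'I_n)
  (w : 'rV[R]_m) : R :=
  - s (QA_pool D g ps w) j.

Definition is_projection k (A : set 'rV[R]_k) (x w' : 'rV[R]_k) : Prop :=
  A w' /\ forall y, A y -> norm2 (x - w') <= norm2 (x - y).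

Definition ogd_update m (wt w' : 'rV[R]_m) : Prop :=
  (simplex m wt -> w' = wt) /\ (~ simplex m wt -> is_projection (simplex m) wt w').

Definition step_size (M : R) (m t : nat) : R := 1 / (M * Num.sqrt (m%:R * t%:R)).

End Defs.
Arguments simplex {R} k.

(* Main.v *)
Require Import Defs.
From HB Require Import structures.
From mathcomp Require Import all_boot all_order all_algebra.
From mathcomp Require Import boolp classical_sets reals.
From mathcomp Require Import ring lra.
Import Order.TTheory GRing.Theory Num.Theory.
Local Open Scope ring_scope.
Local Open Scope classical_set_scope.
Set Implicit Arguments. Unset Strict Implicit. Unset Printing Implicit Defensive.

Section S1.
Variable R : realType.
Implicit Types (a b c eps : R).

Lemma dotC k (x y : 'rV[R]_k) : dot x y = dot y x.
Proof. by apply: eq_bigr => i _; rewrite mulrC. Qed.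
Lemma dotDl k (x y z : 'rV[R]_k) : dot (x + y) z = dot x z + dot y z.
Proof. by rewrite /dot -big_split; apply: eq_bigr => i _; rewrite !mxE mulrDl. Qed.
Lemma dotNl k (x z : 'rV[R]_k) : dot (- x) z = - dot x z.
Proof. by rewrite /dot -sumrN; apply: eq_bigr => i _; rewrite !mxE mulNr. Qed.
Lemma dotBl k (x y z : 'rV[R]_k) : dot (x - y) z = dot x z - dot y z.
Proof. by rewrite dotDl dotNl. Qed.
Lemma dotZl k a (x z : 'rV[R]_k) : dot (a *: x) z = a * dot x z.
Proof. by rewrite /dot mulr_sumr; apply: eq_bigr => i _; rewrite !mxE mulrA. Qed.
Lemma dotDr k (x y z : 'rV[R]_k) : dot z (x + y) = dot z x + dot z y.
Proof. by rewrite dotC dotDl !(dotC z). Qed.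
Lemma dotNr k (x z : 'rV[R]_k) : dot z (- x) = - dot z x.
Proof. by rewrite dotC dotNl dotC. Qed.
Lemma dotBr k (x y z : 'rV[R]_k) : dot z (x - y) = dot z x - dot z y.
Proof. by rewrite dotDr dotNr. Qed.
Lemma dotZr k a (x z : 'rV[R]_k) : dot z (a *: x) = a * dot z x.
Proof. by rewrite dotC dotZl dotC. Qed.
Lemma dot0l k (z : 'rV[R]_k) : dot 0 z = 0.
Proof. by rewrite /dot big1 // => i _; rewrite mxE mul0r. Qed.
Lemma dot_sumr k m (z : 'rV[R]_k) (f : 'I_m -> 'rV[R]_k) :
  dot z (\sum_(i < m) f i) = \sum_(i < m) dot z (f i).
Proof.
elim: m f => [|m IH] f; first by rewrite !big_ord0 dotC dot0l.
by rewrite !big_ord_recr /= dotDr IH.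
Qed.
Lemma dot_ge0 k (x : 'rV[R]_k) : 0 <= dot x x.
Proof. by apply: sumr_ge0 => i _; rewrite -expr2 sqr_ge0. Qed.
Lemma norm2_ge0 k (x : 'rV[R]_k) : 0 <= norm2 x.
Proof. exact: sqrtr_ge0. Qed.
Lemma norm2Z k a (x : 'rV[R]_k) : 0 <= a -> norm2 (a *: x) = a * norm2 x.
Proof.
move=> a0; rewrite /norm2 dotZl dotZr mulrA sqrtrM ?mulr_ge0 //.
by rewrite -expr2 sqrtr_sqr ger0_norm.
Qed.
Lemma norm2_le k (x y : 'rV[R]_k) : norm2 x <= norm2 y -> dot x x <= dot y y.
Proof. by rewrite /norm2 ler_sqrt // dot_ge0. Qed.
Lemma norm2_sqr k (x : 'rV[R]_k) : norm2 x ^+ 2 = dot x x.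
Proof. by rewrite sqr_sqrtr // dot_ge0. Qed.

Lemma le_eps a b c : 0 <= c -> (forall eps, 0 < eps -> a <= b + eps * c) -> a <= b.
Proof.
move=> c0 H; apply/ler_addgt0Pr => e e0.
have c1 : 0 < c + 1 by lra.
have := H (e / (c + 1)) (divr_gt0 e0 c1).
suff : e / (c + 1) * c <= e by lra.
by rewrite mulrAC ler_pdivrMr //; nra.
Qed.

Lemma seg_eq k (x y : 'rV[R]_k) l : l *: y + (1 - l) *: x = x + l *: (y - x).
Proof. by apply/rowP => i; rewrite !mxE; ring. Qed.

Lemma seg_lemma k (A : set 'rV[R]_k) f x d y :
  convex_set A -> A x -> A y -> rel_gradient A f x d ->
  forall eps, 0 < eps -> exists t, [/\ 0 < t, t <= 1, A (x + t *: (y - x)) &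
    `|f (x + t *: (y - x)) - f x - t * dot d (y - x)| <= eps * (t * norm2 (y - x))].
Proof.
move=> cA Ax Ay rg eps e0; have [del d0 Hd] := rg eps e0.
set N := norm2 (y - x); have N0 : 0 <= N by apply: norm2_ge0.
have Nd : 0 < N + del by lra.
set t := del / (N + del).
have t0 : 0 < t by apply: divr_gt0.
have t1 : t <= 1 by rewrite ler_pdivrMr // mul1r; lra.
have Az : A (x + t *: (y - x)) by rewrite -seg_eq; apply: cA => //; rewrite (ltW t0) t1.
exists t; split => //.
have -> : t * dot d (y - x) = dot d (x + t *: (y - x) - x).
  by rewrite addrAC subrr add0r dotZr.
have -> : t * N = norm2 (x + t *: (y - x) - x).
  by rewrite addrAC subrr add0r norm2Z // ltW.
apply: Hd => //; rewrite addrAC subrr add0r norm2Z ?(ltW t0) // -/N.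
rewrite /t mulrAC ltr_pdivrMr //; nra.
Qed.

End S1.

Section SLA.
Variable R : realType.

Lemma dot_mx k (u c : 'rV[R]_k) : dot u c = (u *m c^T) ord0 ord0.
Proof. by rewrite /dot !mxE; apply: eq_bigr => i _; rewrite !mxE. Qed.

Lemma span_sumzero (n : nat) (p : 'rV[R]_n) (x : 'I_n.-1 -> 'rV[R]_n) (c : 'rV[R]_n) :
  (0 < n)%N ->
  row_free (\matrix_(i < n.-1) (x i - p)) ->
  (forall i, \sum_k (x i - p) ord0 k = 0) ->
  (forall i, dot (x i - p) c = 0) ->
  forall v : 'rV_n, \sum_k v ord0 k = 0 -> dot v c = 0.
Proof.
move=> n0 rf sx dx v sv.
set V := \matrix_(i < n.-1) (x i - p).
pose one : 'cV[R]_n := const_mx 1.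
have sVK : (V <= kermx one)%MS.
  apply/sub_kermxP; apply/matrixP => i j; rewrite !mxE -[RHS](sx i).
  by apply: eq_bigr => k _; rewrite !mxE mulr1.
have r1 : \rank one = 1%N.
  rewrite -mxrank_tr rank_rV; case: eqP => // /matrixP/(_ ord0 (Ordinal n0)).
  by rewrite !mxE => /eqP; rewrite oner_eq0.
have sKV : (kermx one <= V)%MS.
  rewrite -(mxrank_leqif_sup sVK).2 mxrank_ker r1 subn1.
  by move: rf; rewrite /row_free.
have svK : (v <= kermx one)%MS.
  apply/sub_kermxP; apply/matrixP => i j; rewrite !mxE ord1 -[RHS]sv.
  by apply: eq_bigr => k _; rewrite !mxE mulr1.
case/submxP: (submx_trans svK sKV) => E ->.
rewrite dot_mx -mulmxA.
have -> : V *m c^T = 0.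
  apply/matrixP => i j; rewrite ord1 [RHS]mxE -(dx i) dot_mx !mxE.
  by apply: eq_bigr => k _; rewrite !mxE.
by rewrite mulmx0 mxE.
Qed.
End SLA.

Section K.
Variable R : realType.
Variable n : nat.
Variable D : set 'rV[R]_n.
Variable s : 'rV[R]_n -> 'I_n -> R.
Variable g : 'rV[R]_n -> 'rV[R]_n.
Hypothesis HD : forecast_domain D.
Hypothesis Hproper : proper_scoring_rule D s.
Hypothesis Hcont : continuous_scoring_rule D s.
Hypothesis HG : strictly_convex_on D (expected_score s).
Hypothesis Hg : exposure_function D s g.

Definition sig (x : 'rV[R]_n) : 'rV[R]_n := \row_k s x k.
Local Notation G := (expected_score s).

Lemma G_dot x : G x = dot x (sig x).
Proof. by apply: eq_bigr => i _; rewrite mxE. Qed.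

Lemma proper_dot p x : D p -> D x -> dot p (sig x) <= G p.
Proof.
move=> Dp Dx; have [H _] := Hproper Dp Dx.
by rewrite /dot; under eq_bigr do rewrite mxE.
Qed.

Lemma cD : convex_set D. Proof. by case: HD. Qed.

Lemma G_convex x y l : D x -> D y -> 0 <= l <= 1 ->
  G (l *: x + (1 - l) *: y) <= l * G x + (1 - l) * G y.
Proof.
move=> Dx Dy /andP[l0 l1].
have [->|xy] := eqVneq x y.
  by rewrite -scalerDl subrKC scale1r -mulrDl subrKC mul1r.
have [->|ln0] := eqVneq l 0.
  by rewrite scale0r add0r subr0 scale1r mul0r add0r mul1r.
have [->|ln1] := eqVneq l 1.
  by rewrite subrr scale0r addr0 scale1r mul0r addr0 mul1r.
apply: ltW; apply: HG => //; first by apply/eqP.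
by rewrite !lt_neqAle l0 l1 eq_sym ln0 ln1.
Qed.

Lemma K2 x y : D x -> D y -> dot (g x) (y - x) <= G y - G x.
Proof.
move=> Dx Dy; have [_ rg] := Hg Dx.
apply: (@le_eps _ _ _ (norm2 (y - x))); first exact: norm2_ge0.
move=> eps e0; have [t [t0 t1 Dz H]] := seg_lemma cD Dx Dy rg e0.
have Hc : G (x + t *: (y - x)) <= t * G y + (1 - t) * G x.
  by rewrite -seg_eq; apply: G_convex => //; rewrite (ltW t0) t1.
move: H; rewrite ler_norml => /andP[H _].
suff : t * (dot (g x) (y - x) - eps * norm2 (y - x)) <= t * (G y - G x).
  by rewrite ler_pM2l // => ?; lra.
set N := norm2 (y - x) in H *; set dg := dot (g x) (y - x) in H *.
set Gz := G _ in H Hc.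
nra.
Qed.

Lemma K3 x y : D x -> D y -> dot (y - x) (sig x) <= dot (y - x) (g x).
Proof.
move=> Dx Dy; have [_ rg] := Hg Dx.
apply: (@le_eps _ _ _ (norm2 (y - x))); first exact: norm2_ge0.
move=> eps e0; have [t [t0 t1 Dz H]] := seg_lemma cD Dx Dy rg e0.
have P := proper_dot Dz Dx.
move: H; rewrite ler_norml => /andP[_ H].
suff : t * dot (y - x) (sig x) <= t * (dot (y - x) (g x) + eps * norm2 (y - x)).
  by rewrite ler_pM2l // => ?; lra.
have E : dot (x + t *: (y - x)) (sig x) = G x + t * dot (y - x) (sig x).
  by rewrite dotDl dotZl G_dot.
rewrite E in P; rewrite (dotC (y - x) (g x)).
set N := norm2 (y - x) in H *; set dg := dot (g x) (y - x) in H *.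
set Gz := G _ in H P.
nra.
Qed.

Lemma min_pos (f : 'I_n -> R) : (forall k, 0 < f k) ->
  exists2 d : R, 0 < d & forall k, d <= f k.
Proof.
move=> fp; set S := \sum_k (f k)^-1.
have S0 : 0 <= S by apply: sumr_ge0 => k _; rewrite invr_ge0 ltW.
exists (1 / (1 + S)); first by apply: divr_gt0 => //; lra.
move=> k; have fk := fp k.
have : (f k)^-1 <= S.
  by rewrite /S (bigD1 k) //= lerDl; apply: sumr_ge0 => i _; rewrite invr_ge0 ltW.
move=> Hk; rewrite ler_pdivrMr; last by lra.
have : f k * (f k)^-1 = 1 by rewrite mulfV // gt_eqF.
nra.
Qed.

Lemma K4 x y : D x -> D y -> dot (y - x) (g x) <= dot (y - x) (sig x).
Proof.
move=> Dx Dy.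
set C := \sum_k `|(y - x) ord0 k|.
apply: (@le_eps _ _ _ C); first by apply: sumr_ge0 => k _.
move=> eps e0.
have : forall k, exists2 d : R, 0 < d & forall q, D q -> norm2 (q - x) < d ->
    `|s q k - s x k| < eps.
  by move=> k; apply: Hcont.
move=> /(_ _)/cid2 H.
pose df k := s2val (H k).
have df0 k : 0 < df k by exact: (s2valP (H k)).
have dfH k := s2valP' (H k).
have [d d0 dle] := min_pos df0.
set N := norm2 (y - x); have N0 : 0 <= N by apply: norm2_ge0.
have Nd : 0 < N + d by lra.
set t := d / (N + d).
have t0 : 0 < t by apply: divr_gt0.
have t1 : t <= 1 by rewrite ler_pdivrMr // mul1r; lra.
set z := x + t *: (y - x).
have Dz : D z by rewrite /z -seg_eq; apply: cD => //; rewrite (ltW t0) t1.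
have zx : z - x = t *: (y - x) by rewrite /z addrAC subrr add0r.
have close : forall k, `|s z k - s x k| < eps.
  move=> k; apply: (dfH k) => //; apply: lt_le_trans (dle k).
  rewrite zx norm2Z ?ltW // -/N /t mulrAC ltr_pdivrMr //; nra.
have A : dot (y - x) (g x) <= dot (y - x) (sig z).
  have P := proper_dot Dx Dz.
  have K := K2 Dx Dz.
  rewrite zx dotZr in K.
  have E : dot z (sig z) = dot x (sig z) + t * dot (y - x) (sig z).
    by rewrite /z dotDl dotZl.
  rewrite -G_dot in E; rewrite dotC.
  suff : t * dot (g x) (y - x) <= t * dot (y - x) (sig z) by rewrite ler_pM2l.
  lra.
suff : `|dot (y - x) (sig z) - dot (y - x) (sig x)| <= eps * C.
  rewrite ler_norml => /andP[_ B]; lra.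
rewrite -dotBr /dot /C mulr_sumr.
apply: le_trans (ler_norm_sum _ _ _) _.
apply: ler_sum => k _; rewrite !mxE normrM mulrC.
by apply: ler_wpM2r => //; apply: ltW.
Qed.

Lemma Kfull x : D x -> forall v : 'rV[R]_n, \sum_k v ord0 k = 0 ->
  dot v (sig x) = dot v (g x).
Proof.
move=> Dx v sv.
have Ky : forall y, D y -> dot (y - x) (sig x - g x) = 0.
  move=> y Dy; rewrite dotBr; apply/eqP; rewrite subr_eq0 eq_le.
  by rewrite K3 // K4.
case: HD => _ [sub [p [xs [Dp [Dxs rf]]]]].
have n0 : (0 < n)%N.
  case: n D x Dx sub {Ky v sv rf xs Dxs Dp p} => // D0 x Dx sub.
  by have [_] := sub _ Dx; rewrite big_ord0 => /eqP; rewrite eq_sym oner_eq0.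
apply/eqP; rewrite -subr_eq0 -dotBr; apply/eqP.
apply: (span_sumzero n0 rf) => // i.
  have [_ s1] := sub _ (Dxs i); have [_ s2] := sub _ Dp.
  by rewrite (eq_bigr (fun k => xs i ord0 k - p ord0 k)) ?sumrB ?s1 ?s2 ?subrr // => k _; rewrite !mxE.
have -> : xs i - p = (xs i - x) - (p - x) by rewrite opprB addrA subrK.
by rewrite dotBl !Ky // subrr.
Qed.

End K.

Section P3.
Variable R : realType.

Lemma conv_comb k (C : set 'rV[R]_k) : convex_set C ->
  forall m (w : 'I_m -> R) (c : 'I_m -> 'rV[R]_k),
  (forall i, 0 <= w i) -> \sum_i w i = 1 -> (forall i, C (c i)) ->
  C (\sum_i w i *: c i).
Proof.
move=> cC; elim=> [|m IH] w c w0 w1 cc.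
  by move: w1; rewrite big_ord0 => /eqP; rewrite eq_sym oner_eq0.
rewrite big_ord_recr /=; move: w1; rewrite big_ord_recr /= => w1.
set a := w ord_max in w1 *.
set S := \sum_(i < m) w (widen_ord (leqnSn m) i) in w1.
have S0 : 0 <= S by apply: sumr_ge0 => i _.
have [a1|a1] := eqVneq a 1.
  have Se : S = 0 by lra.
  have := (psumr_eq0P (fun i _ => w0 (widen_ord (leqnSn m) i)) Se) => wz.
  rewrite big1 ?add0r ?a1 ?scale1r // => i _.
  by rewrite wz // scale0r.
have Sp : 0 < S.
  rewrite lt_neqAle S0 andbT; apply/eqP => S0'.
  by move: a1; rewrite -w1 -S0' add0r eqxx.
 have Ci := IH (fun i => w (widen_ord (leqnSn m) i) / S) (fun i => c (widen_ord (leqnSn m) i))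
   (fun i => divr_ge0 (w0 _) S0) ltac:(by rewrite -mulr_suml mulfV // gt_eqF) (fun i => cc _).
  set inner := \sum_i _ in Ci.
  have -> : \sum_(i < m) w (widen_ord (leqnSn m) i) *: c (widen_ord (leqnSn m) i)
      = (1 - a) *: inner.
    rewrite /inner scaler_sumr; apply: eq_bigr => i _; rewrite scalerA.
    by congr (_ *: _); rewrite -w1 addrK mulrC divfK // gt_eqF.
  rewrite addrC; apply: cC => //.
  have := w0 ord_max; rewrite -/a => a0; rewrite a0 /=; lra.
Qed.

Definition ej n (j : 'I_n) : 'rV[R]_n := \row_i (i == j)%:R.

Lemma dot_ej n (j : 'I_n) v : dot (ej j) v = v ord0 j.
Proof.
rewrite /dot (bigD1 j) //= big1 ?addr0 => [|i ij]; first by rewrite mxE eqxx mul1r.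
by rewrite mxE (negbTE ij) mul0r.
Qed.

Lemma sum_ej n (j : 'I_n) : \sum_k ej j ord0 k = 1.
Proof.
rewrite (bigD1 j) //= big1 ?addr0 => [|i ij]; first by rewrite mxE eqxx.
by rewrite mxE (negbTE ij).
Qed.

Lemma simplex_le1 n (x : 'rV[R]_n) k : simplex n x -> 0 <= x ord0 k <= 1.
Proof.
move=> [x0 x1]; rewrite x0 /= -x1 (bigD1 k) //= lerDl.
by apply: sumr_ge0 => i _.
Qed.

Lemma dot_ej_sub n (j : 'I_n) x : simplex n x -> dot (ej j - x) (ej j - x) <= 2.
Proof.
move=> sx; have [_ x1] := sx.
have : \sum_k ((ej j - x) ord0 k * (ej j - x) ord0 k) <= \sum_k (x ord0 k + ej j ord0 k).
  apply: ler_sum => k _; have /andP[a b] := simplex_le1 k sx.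
  rewrite !mxE; case: (k == j) => /=; nra.
by rewrite big_split /= x1 sum_ej.
Qed.

Lemma CS k (u v : 'rV[R]_k) : dot u v ^+ 2 <= dot u u * dot v v.
Proof.
have [u0|upos] := eqVneq (dot u u) 0.
  have uz : forall i, u ord0 i = 0.
    have sq : forall i, true -> 0 <= u ord0 i * u ord0 i by move=> i _; rewrite -expr2 sqr_ge0.
    move=> i; have := psumr_eq0P sq u0.
    by move/(_ i isT)/eqP; rewrite mulf_eq0 orbb => /eqP.
  have -> : dot u v = 0 by rewrite /dot big1 // => i _; rewrite uz mul0r.
  by rewrite expr0n /= mulr_ge0 ?dot_ge0.
have up : 0 < dot u u by rewrite lt_neqAle eq_sym upos dot_ge0.
set l := dot u v / dot u u.
have := dot_ge0 (v - l *: u).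
rewrite !(dotBl, dotBr, dotZl, dotZr) (dotC v u).
have e : l * dot u u = dot u v by rewrite /l divfK // gt_eqF.
nra.
Qed.

Lemma norm2_le_sqr k (u : 'rV[R]_k) M : norm2 u <= M -> dot u u <= M ^+ 2.
Proof.
move=> H; rewrite -norm2_sqr; have h0 := norm2_ge0 u; nra.
Qed.

End P3.
Arguments ej {R n}.

Section Star.
Variable R : realType.
Variable n : nat.
Variable D : set 'rV[R]_n.
Variable s : 'rV[R]_n -> 'I_n -> R.
Variable g : 'rV[R]_n -> 'rV[R]_n.
Hypothesis HD : forecast_domain D.
Hypothesis Hproper : proper_scoring_rule D s.
Hypothesis Hcont : continuous_scoring_rule D s.
Hypothesis HG : strictly_convex_on D (expected_score s).
Hypothesis Hg : exposure_function D s g.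
Hypothesis Hconvexp : convex_exposure D g.

Lemma pool_spec m (ps : 'I_m -> 'rV[R]_n) w : (forall i, D (ps i)) -> simplex m w ->
  D (QA_pool D g ps w) /\ g (QA_pool D g ps w) = \sum_i w ord0 i *: g (ps i).
Proof.
move=> Dps [w0 w1].
apply: (@xgetPex _ 0 [set p | D p /\ g p = \sum_i w ord0 i *: g (ps i)]).
have := conv_comb Hconvexp w0 w1 (c := fun i => g (ps i)).
case=> [i|p Dp gp]; first by exists (ps i).
by exists p.
Qed.

Definition gam m (ps : 'I_m -> 'rV[R]_n) (j : 'I_n) w : 'rV[R]_m :=
  \row_k dot (ej j - QA_pool D g ps w) (g (ps k)).

Lemma star m (ps : 'I_m -> 'rV[R]_n) j w w' : (forall i, D (ps i)) ->
  simplex m w -> simplex m w' ->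
  s (QA_pool D g ps w') j - s (QA_pool D g ps w) j <= dot (w' - w) (gam ps j w).
Proof.
move=> Dps sw sw'.
have [Dx gx] := pool_spec Dps sw; have [Dx' gx'] := pool_spec Dps sw'.
set x := QA_pool D g ps w in Dx gx *; set x' := QA_pool D g ps w' in Dx' gx' *.
have P := proper_dot Hproper Dx Dx'.
rewrite G_dot in P.
have sv : \sum_k (ej j - x) ord0 k = 0.
  have [_ x1] := HD.2.1 _ Dx.
  rewrite (eq_bigr (fun k => ej j ord0 k - x ord0 k)) ?sumrB ?sum_ej ?x1 ?subrr //.
  by move=> k _; rewrite !mxE.
have K1 := Kfull HD Hproper Hcont HG Hg Dx sv.
have K2 := Kfull HD Hproper Hcont HG Hg Dx' sv.
have E : dot (w' - w) (gam ps j w) = dot (ej j - x) (g x') - dot (ej j - x) (g x).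
  rewrite gx gx' !dot_sumr -sumrB [LHS]/dot; apply: eq_bigr => i _.
  by rewrite !mxE !dotZr mulrBl.
rewrite E -K1 -K2 !dotBl !dot_ej !mxE.
lra.
Qed.

Lemma gam_bound m (ps : 'I_m -> 'rV[R]_n) j w M : (forall i, D (ps i)) ->
  simplex m w -> (forall p, D p -> norm2 (g p) <= M) ->
  forall k, (gam ps j w ord0 k) ^+ 2 <= 2 * M ^+ 2.
Proof.
move=> Dps sw HM k; rewrite mxE.
have [Dx _] := pool_spec Dps sw.
apply: le_trans (CS _ _) _.
have h1 := dot_ej_sub j (HD.2.1 _ Dx).
have h2 := norm2_le_sqr (HM _ (Dps k)).
have := dot_ge0 (g (ps k)); have := dot_ge0 (ej j - QA_pool D g ps w).
nra.
Qed.

End Star.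

Section P4.
Variable R : realType.

Lemma dot_sqrBZ k (u v : 'rV[R]_k) c :
  dot (u - c *: v) (u - c *: v) = dot u u - 2 * c * dot v u + c ^+ 2 * dot v v.
Proof. rewrite !(dotBl, dotBr, dotZl, dotZr) (dotC u v); ring. Qed.

Lemma dot_sqrD k (u v : 'rV[R]_k) :
  dot (u + v) (u + v) = dot u u + 2 * dot u v + dot v v.
Proof. rewrite !(dotDl, dotDr) (dotC v u); ring. Qed.

Lemma simplex_convex m : convex_set (simplex m : set 'rV[R]_m).
Proof.
move=> x y [x0 x1] [y0 y1] l /andP[l0 l1]; split.
  by move=> i; rewrite !mxE; apply: addr_ge0; apply: mulr_ge0 => //; lra.
rewrite (eq_bigr (fun i => l * x ord0 i + (1 - l) * y ord0 i)); last by move=> i _; rewrite !mxE.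
by rewrite big_split /= -!mulr_sumr x1 y1; ring.
Qed.

Lemma proj_ineq k (A : set 'rV[R]_k) z P y : convex_set A -> is_projection A z P -> A y ->
  dot (z - P) (z - P) + dot (P - y) (P - y) <= dot (z - y) (z - y).
Proof.
move=> cA [AP HP] Ay.
set c := dot (z - P) (y - P); set q := dot (y - P) (y - P).
have q0 : 0 <= q by apply: dot_ge0.
have c0 : 2 * c <= 0.
  apply: (@le_eps _ _ _ q q0) => eps e0.
  set l := eps / (1 + eps).
  have l0 : 0 < l by apply: divr_gt0 => //; lra.
  have l1 : l <= 1 by rewrite ler_pdivrMr; lra.
  have le : l <= eps by rewrite ler_pdivrMr; nra.
  have Al : A (P + l *: (y - P)) by rewrite -seg_eq; apply: cA => //; rewrite (ltW l0) l1.
  have := norm2_le (HP _ Al).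
  rewrite opprD addrA dot_sqrBZ -/q.
  move=> h; suff : l * (2 * c) <= l * (l * q) by rewrite ler_pM2l //; nra.
  rewrite expr2 (dotC (y - P) (z - P)) -/c in h; nra.
have -> : z - y = (z - P) + (P - y) by rewrite addrA subrK.
rewrite [X in _ <= X]dot_sqrD.
have : dot (z - P) (P - y) = - c by rewrite /c -dotNr opprB.
lra.
Qed.

Lemma ogd_step m (w ws d a P : 'rV[R]_m) (eta : R) :
  0 < eta -> simplex m w -> simplex m ws ->
  (forall y, simplex m y -> 0 <= dot (d - a) (y - w)) ->
  ogd_update (w - eta *: d) P ->
  simplex m P /\ dot (P - ws) (P - ws) <=
    dot (w - ws) (w - ws) - 2 * eta * dot d (w - ws) + eta ^+ 2 * dot a a.
Proof.
move=> e0 sw sws Fd [U1 U2].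
set z := w - eta *: d.
have [sP H] : simplex m P /\ dot (z - P) (z - P) + dot (P - ws) (P - ws) <= dot (z - ws) (z - ws).
  case: (EM (simplex m z)) => sz.
    by rewrite (U1 sz) subrr dot0l add0r.
  have pr := U2 sz; split; first by case: pr.
  exact: proj_ineq (@simplex_convex m) pr sws.
split => //.
have FP := Fd _ sP.
have E1 : z - P = (w - P) - eta *: d by rewrite /z addrAC.
have E2 : z - ws = (w - ws) - eta *: d by rewrite /z addrAC.
rewrite E1 E2 !dot_sqrBZ in H.
have G0 := dot_ge0 ((w - P) - eta *: a); rewrite dot_sqrBZ in G0.
have : P - w = - (w - P) by rewrite opprB.
move=> e; rewrite e dotNr dotBl in FP.
have : eta * dot d (w - P) <= eta * dot a (w - P) by rewrite ler_pM2l //; lra.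
lra.
Qed.

End P4.

Unset Implicit Arguments.

Lemma ogd_simplex (R : realType) m (z P : 'rV[R]_m) : ogd_update z P -> simplex m P.
Proof.
case=> U1 U2; case: (EM (simplex m z)) => sz; first by rewrite (U1 sz).
by case: (U2 sz).
Qed.

Lemma dist_simplex (R : realType) m (x y : 'rV[R]_m) :
  simplex m x -> simplex m y -> dot (x - y) (x - y) <= 2.
Proof.
move=> sx sy; have [_ x1] := sx; have [_ y1] := sy.
have : \sum_k ((x - y) ord0 k * (x - y) ord0 k) <= \sum_k (x ord0 k + y ord0 k).
  apply: ler_sum => k _; have /andP[a b] := simplex_le1 k sx.
  have /andP[c d] := simplex_le1 k sy.
  rewrite !mxE; nra.
by rewrite big_split /= x1 y1.
Qed.

Lemma sqrt_step (R : realType) (a b : R) : 0 <= a -> 0 < b -> b ^+ 2 = a ^+ 2 + 1 ->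
  1 / b <= 2 * (b - a).
Proof.
move=> a0 b0 e; rewrite ler_pdivrMr //.
have : 0 <= (a - b) ^+ 2 by apply: sqr_ge0.
nra.
Qed.

Theorem theorem5p5 (R : realType) (n m T : nat)
  (D : set 'rV[R]_n) (s : 'rV[R]_n -> 'I_n -> R) (g : 'rV[R]_n -> 'rV[R]_n)
  (M : R)
  (HD : forecast_domain D)
  (Hproper : proper_scoring_rule D s)
  (Hbounded : bounded_scoring_rule D s)
  (Hcont : continuous_scoring_rule D s)
  (HG : strictly_convex_on D (expected_score s))
  (Hg : exposure_function D s g)
  (Hconvexp : convex_exposure D g)
  (HM : forall p, D p -> norm2 (g p) <= M)
  (ps : nat -> 'I_m -> 'rV[R]_n) (j : nat -> 'I_n)
  (Hps : forall t i, (1 <= t <= T)%N -> D (ps t i))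
  (w : nat -> 'rV[R]_m) (grad : nat -> 'rV[R]_m)
  (Hw1 : simplex m (w 1%N))
  (Hgrad : forall t, (1 <= t <= T)%N ->
     rel_gradient (simplex m) (QA_loss D s g (ps t) (j t)) (w t) (grad t))
  (Hstep : forall t, (1 <= t <= T)%N ->
     ogd_update (w t - step_size M m t *: grad t) (w t.+1)) :
  forall wstar : 'rV[R]_m, simplex m wstar ->
    \sum_(1 <= t < T.+1)
       (s (QA_pool D g (ps t) wstar) (j t) - s (QA_pool D g (ps t) (w t)) (j t))
    <= 3 * Num.sqrt (m%:R) * M * Num.sqrt (T%:R).
Proof.
move=> ws sws.
set r := fun t => s (QA_pool D g (ps t) ws) (j t) - s (QA_pool D g (ps t) (w t)) (j t).
have m0 : (0 < m)%N.
  case: m w Hw1 {Hps Hgrad Hstep grad ws sws r ps} => // w Hw1.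
  by have [_] := Hw1; rewrite big_ord0 => /eqP; rewrite eq_sym oner_eq0.
have [p0 Dp0] : exists p, D p by case: HD => _ [_ [p [_ [Dp _]]]]; exists p.
have M0 : 0 <= M by apply: le_trans (HM _ Dp0); apply: norm2_ge0.
have sw : forall t, (1 <= t <= T.+1)%N -> simplex m (w t).
  elim=> [//|t IH] /andP[_ tT].
  case: t IH tT => [|t] IH tT; first exact: Hw1.
  by apply: (@ogd_simplex _ _ _ _ (Hstep t.+1 _)).
pose gm t := gam D g (ps t) (j t) (w t).
have Hr : forall t, (1 <= t <= T)%N -> r t <= dot (ws - w t) (gm t).
  move=> t tT; apply: (star HD Hproper Hcont HG Hg Hconvexp) => //.
  - by move=> i; apply: Hps.
  - by apply: sw; case/andP: tT => -> /= /leqW.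
have Hgb : forall t, (1 <= t <= T)%N -> forall k, (gm t ord0 k) ^+ 2 <= 2 * M ^+ 2.
  move=> t tT k; apply: (gam_bound HD Hconvexp) => //.
  - by move=> i; apply: Hps.
  - by apply: sw; case/andP: tT => -> /= /leqW.
set RHS := 3 * _ * _ * _.
have [Mz|Mp] := eqVneq M 0.
  have rle : forall t, (1 <= t <= T)%N -> r t <= 0.
    move=> t tT; apply: le_trans (Hr _ tT) _.
    rewrite /dot big1 // => k _.
    have := Hgb _ tT k; rewrite Mz expr0n /= mulr0 => h.
    have : gm t ord0 k ^+ 2 = 0 by apply/eqP; rewrite eq_le h sqr_ge0.
    by move/eqP; rewrite sqrf_eq0 => /eqP ->; rewrite mulr0.
  have : forall T', (T' <= T)%N -> \sum_(1 <= t < T'.+1) r t <= 0.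
    elim=> [|T' IH] TT; first by rewrite big_geq.
    rewrite big_nat_recr //=; have := IH (ltnW TT); have := rle T'.+1 ltac:(by rewrite TT).
    lra.
  by move/(_ T (leqnn T)); rewrite /RHS Mz mulr0 mul0r.
have Mpos : 0 < M by rewrite lt_neqAle eq_sym Mp M0.
set A := M * Num.sqrt (m%:R).
have sm : 0 < Num.sqrt (m%:R : R) by rewrite sqrtr_gt0 ltr0n.
have A0 : 0 < A by apply: mulr_gt0.
pose Dt t := dot (w t - ws) (w t - ws).
have step : forall t, (1 <= t <= T)%N ->
    r t <= (A * Num.sqrt (t%:R) / 2) * (Dt t - Dt t.+1) + A / Num.sqrt (t%:R).
  move=> t tT.
  have swt : simplex m (w t) by apply: sw; case/andP: tT => -> /= /leqW.
  have t0 : (0 < t)%N by case/andP: tT.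
  set b := Num.sqrt (t%:R : R).
  have b0 : 0 < b by rewrite sqrtr_gt0 ltr0n.
  set eta := step_size M m t.
  have etaE : eta = 1 / (A * b).
    by rewrite /eta /step_size sqrtrM ?ler0n // /A mulrA.
  have eta0 : 0 < eta by rewrite etaE; apply: divr_gt0 => //; apply: mulr_gt0.
  set a := - gm t.
  have Fd : forall y, simplex m y -> 0 <= dot (grad t - a) (y - w t).
    move=> y sy.
    rewrite /a opprK dotDl.
    suff : - dot (grad t) (y - w t) <= dot (gm t) (y - w t) by lra.
    apply: (@le_eps _ _ _ (norm2 (y - w t))); first exact: norm2_ge0.
    move=> eps e0.
    have [tau [tau0 tau1 Sz H]] := seg_lemma (@simplex_convex R m) swt sy (Hgrad t tT) e0.
    have St := star HD Hproper Hcont HG Hg Hconvexp (j t) (fun i => Hps t i tT) swt Sz.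
    rewrite addrAC subrr add0r dotZl in St.
    move: H; rewrite /QA_loss ler_norml => /andP[_ H].
    rewrite (dotC (y - w t)) in St.
    suff : tau * (- dot (grad t) (y - w t)) <=
           tau * (dot (gm t) (y - w t) + eps * norm2 (y - w t)) by rewrite ler_pM2l.
    set N := norm2 (y - w t) in H *.
    set dg := dot (grad t) (y - w t) in H *.
    set dgm := dot (gm t) (y - w t) in St *.
    nra.
  have [_ OS] := ogd_step eta0 swt sws Fd (Hstep t tT).
  have R2 : r t <= dot (grad t) (w t - ws).
    rewrite /r.
    set phw := s (QA_pool D g (ps t) (w t)) (j t).
    set phs := s (QA_pool D g (ps t) ws) (j t).
    suff : dot (grad t) (ws - w t) <= phw - phs.
      have -> : ws - w t = - (w t - ws) by rewrite opprB.
      rewrite dotNr; lra.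
    apply: (@le_eps _ _ _ (norm2 (ws - w t))); first exact: norm2_ge0.
    move=> eps e0.
    have [tau [tau0 tau1 Sz H]] := seg_lemma (@simplex_convex R m) swt sws (Hgrad t tT) e0.
    set z := w t + tau *: (ws - w t) in Sz H.
    have S1 := star HD Hproper Hcont HG Hg Hconvexp (j t) (fun i => Hps t i tT) Sz swt.
    have S2 := star HD Hproper Hcont HG Hg Hconvexp (j t) (fun i => Hps t i tT) Sz sws.
    have E1 : w t - z = - (tau *: (ws - w t)) by rewrite /z opprD addrA subrr add0r.
    have E2 : ws - z = (1 - tau) *: (ws - w t).
      by apply/rowP => i; rewrite /z !mxE; ring.
    rewrite E1 dotNl dotZl in S1; rewrite E2 dotZl in S2.
    move: H; rewrite /QA_loss ler_norml => /andP[H _].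
    rewrite -/phw -/phs in S1 S2 H.
    set phz := s (QA_pool D g (ps t) z) (j t) in S1 S2 H.
    set c := dot _ (gam _ _ _ _ _) in S1 S2.
    set N := norm2 (ws - w t) in H *.
    set dg := dot (grad t) (ws - w t) in H *.
    suff : tau * dg <= tau * (phw - phs + eps * N) by rewrite ler_pM2l.
    have : (1 - tau) * (phw - phz) <= (1 - tau) * (- (tau * c)) by rewrite ler_wpM2l //; lra.
    have : tau * (phs - phz) <= tau * ((1 - tau) * c) by rewrite ler_pM2l.
    nra.
  have R3 : dot a a <= 2 * A ^+ 2.
    rewrite /a dotNl dotNr opprK /dot.
    have : \sum_(k < m) gm t ord0 k * gm t ord0 k <= \sum_(k < m) (2 * M ^+ 2).
      by apply: ler_sum => k _; rewrite -expr2; apply: Hgb.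
    rewrite sumr_const card_ord /A exprMn sqr_sqrtr ?ler0n // -mulr_natr => h.
    apply: le_trans h _; nra.
  rewrite -/(Dt t) -/(Dt t.+1) in OS.
  have key : 2 * eta * r t <= Dt t - Dt t.+1 + eta ^+ 2 * (2 * A ^+ 2).
    have : eta ^+ 2 * dot a a <= eta ^+ 2 * (2 * A ^+ 2) by rewrite ler_wpM2l ?sqr_ge0.
    have : eta * r t <= eta * dot (grad t) (w t - ws) by rewrite ler_pM2l.
    lra.
  have Ab : 0 < A * b by apply: mulr_gt0.
  have H2 : (A * b / 2) * (2 * eta * r t) <= (A * b / 2) * (Dt t - Dt t.+1 + eta ^+ 2 * (2 * A ^+ 2)).
    by rewrite ler_wpM2l // divr_ge0 // ltW.
  have E1 : (A * b / 2) * (2 * eta * r t) = r t.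
    rewrite etaE; field; by rewrite ?gt_eqF.
  have E2 : (A * b / 2) * (Dt t - Dt t.+1 + eta ^+ 2 * (2 * A ^+ 2)) =
     (A * b / 2) * (Dt t - Dt t.+1) + A / b.
    rewrite etaE; field; by rewrite ?gt_eqF.
  by rewrite E1 E2 in H2.
have claim : forall T', (T' <= T)%N ->
    \sum_(1 <= t < T'.+1) r t <= A * Num.sqrt (T'%:R) * (3 - Dt T'.+1 / 2).
  elim=> [|T' IH] TT; first by rewrite big_geq // sqrtr0 mulr0 mul0r.
  rewrite big_nat_recr //=.
  have IH' := IH (ltnW TT).
  have st := step T'.+1 ltac:(by rewrite TT).
  set a := Num.sqrt (T'%:R : R) in IH' *.
  set b := Num.sqrt (T'.+1%:R : R) in st *.
  have a0 : 0 <= a by apply: sqrtr_ge0.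
  have b0 : 0 < b by rewrite sqrtr_gt0 ltr0n.
  have e : b ^+ 2 = a ^+ 2 + 1 by rewrite !sqr_sqrtr ?ler0n // -addn1 natrD.
  have h1 := @sqrt_step R _ _ a0 b0 e.
  have h2 : a <= b by rewrite ler_sqrt ?ler0n // ler_nat.
  have DD : Dt T'.+1 <= 2.
    by apply: (@dist_simplex R) => //; apply: sw; rewrite /= ltnW.
  have D0 : 0 <= Dt T'.+1 by apply: dot_ge0.
  have K : A / b <= A * ((b - a) * (3 - Dt T'.+1 / 2)).
    apply: ler_wpM2l; first exact: ltW.
    have : 0 <= (b - a) * (1 - Dt T'.+1 / 2) by apply: mulr_ge0; lra.
    have -> : (b - a) * (3 - Dt T'.+1 / 2) = 2 * (b - a) + (b - a) * (1 - Dt T'.+1 / 2) by ring.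
    rewrite mul1r in h1; lra.
  set X := Dt T'.+1 in IH' st K *; set Y := Dt T'.+2 in st *.
  nra.
have := claim T (leqnn T).
move=> h; apply: le_trans h _.
have D0 : 0 <= Dt T.+1 by apply: dot_ge0.
rewrite /RHS /A.
have : 0 <= M * Num.sqrt m%:R * Num.sqrt T%:R by rewrite !mulr_ge0 ?sqrtr_ge0 ?ltW.
nra.
Qed.
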